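(* Consider the following model. Fix $n\ge1$, $\mu\in\mathbb R^n$, $n\times n$ matrices $A,B,C$, a positive definite $\Sigma_0$ and positive initial prices. Let $$R_{t+1}=\mu+Z_{t+1},\qquad \Sigma_{t+1}=CC^\top+A\Sigma_tA^\top+BZ_{t+1}Z_{t+1}^\top B^\top,$$ where conditionally on the past $Z_{t+1}$ has mean $0$ and covariance $\Sigma_t$; prices $S^i_{t+1}=h(S^i_t,R^i_{t+1})$, $\vec S_t=(S^1_t,\dots,S^n_t)^\top$, $\Psi_t=\mathrm{diag}(\vec S_t)$, $P_t=\Psi_t\Sigma_t\Psi_t$. Let $\gamma>0$, $\epsilon>0$, $q:\mathbb R^n\times\mathbb R^{n\times n}\to\mathbb R^+$, and $\widetilde P_t=\frac{\gamma}{\epsilon q(\vec S_t,P_t)}P_t$. Assume: (i) $C$ has full rank, so $c:=\inf_{\|v\|=1}v^\top CC^\top v>0$; (ii) $\|h\|_\infty=\sup_{s,r}|h(s,r)|<\infty$ and there is $\underline s>0$ with $\inf_{s,r}h(s,r)\ge\underline s$; (iii) there is $\chi<\infty$ with $1\le q(s,p)\le\chi$ for all $(s,p)$. Then for all $t$, $$\left\|\frac{1}{\epsilon q(\vec S_t,P_t)}\Psi_t^{-1}\right\|\le\frac{1}{\epsilon\underline s},\qquad \left\|\left(I+\widetilde P_t\Psi_t^{-1}\right)^{-1}P_t\right\|\le\frac{\epsilon}{\gamma}\chi\|h\|_\infty.$$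
   Context: $\|\cdot\|$ denotes the operator norm induced by the Euclidean norm. $\mathrm{diag}(\vec S_t)$ is the diagonal matrix with the entries of $\vec S_t$ on its diagonal. *)

(* Defs.v *)
From HB Require Import structures.
From mathcomp Require Import all_boot all_order all_algebra.
From mathcomp Require Import classical_sets reals.
Set Implicit Arguments. Unset Strict Implicit. Unset Printing Implicit Defensive.
Import Order.TTheory GRing.Theory Num.Theory.
Local Open Scope ring_scope.
Local Open Scope classical_set_scope.

Definition eucl_norm (R : realType) (n : nat) (v : 'cV[R]_n) : R :=
  Num.sqrt (\sum_(i < n) (v i 0) ^+ 2).

Definition opnorm (R : realType) (n : nat) (M : 'M[R]_n) : R :=
  sup [set eucl_norm (M *m v) | v in [set v : 'cV[R]_n | eucl_norm v = 1]].

Definition diag_cV (R : realType) (n : nat) (S : 'cV[R]_n) : 'M[R]_n :=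
  diag_mx S^T.

Definition supnorm2 (R : realType) (h : R -> R -> R) : R :=
  sup (range (fun p : R * R => `|h p.1 p.2|)).

(* Main.v *)
Require Import Defs.
From HB Require Import structures.
From mathcomp Require Import all_boot all_order all_algebra.
From mathcomp Require Import classical_sets reals.
From mathcomp Require Import lra ring.
Import Order.TTheory GRing.Theory Num.Theory.
Local Open Scope ring_scope.
Local Open Scope classical_set_scope.


Lemma eucl_le (R : realType) n (u : 'cV[R]_n) b :
  0 <= b -> \sum_i (u i 0)^+2 <= b^+2 -> eucl_norm u <= b.
Proof.
move=> b0 hs; rewrite /eucl_norm.
apply: (le_trans (ler_wsqrtr hs)); rewrite sqrtr_sqr ger0_norm //.
Qed.

Lemma eucl1 (R : realType) n (u : 'cV[R]_n) :
  eucl_norm u = 1 -> \sum_i (u i 0)^+2 = 1.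
Proof.
rewrite /eucl_norm => h.
have s0 : 0 <= \sum_i (u i 0)^+2 by apply: sumr_ge0 => i _; exact: sqr_ge0.
by rewrite -(sqr_sqrtr s0) h expr1n.
Qed.

Lemma opnorm_le (R : realType) n (M : 'M[R]_n) b : (0 < n)%N ->
  (forall v, eucl_norm v = 1 -> eucl_norm (M *m v) <= b) -> opnorm M <= b.
Proof.
move=> n0 hb; rewrite /opnorm; apply: ge_sup.
  pose i0 := Ordinal n0.
  exists (eucl_norm (M *m \col_i ((i == i0)%:R : R))).
  exists (\col_i ((i == i0)%:R : R)) => //=.
  rewrite /eucl_norm (bigD1 i0) //= big1 ?addr0.
    by rewrite !mxE eqxx expr1n sqrtr1.
  by move=> i hi; rewrite !mxE (negbTE hi) expr0n.
by move=> x [v /= hv <-]; apply: hb.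
Qed.

Lemma invdiag_apply (R : realType) n (s w : 'cV[R]_n) i :
  (forall i, s i 0 != 0) -> (invmx (diag_cV s) *m w) i 0 = w i 0 / s i 0.
Proof.
move=> hs.
have hu : diag_cV s \in unitmx.
  rewrite unitmxE det_diag unitfE; apply/prodf_neq0 => j _; rewrite mxE; exact: hs.
have e : diag_cV s *m (invmx (diag_cV s) *m w) = w by rewrite mulmxA mulmxV // mul1mx.
have := congr1 (fun M : 'cV[R]_n => M i 0) e; rewrite /diag_cV mul_diag_mx !mxE => <-.
by field; exact: hs.
Qed.

Definition psd (R : realType) n (M : 'M[R]_n) :=
  forall x : 'cV[R]_n, 0 <= (x^T *m M *m x) 0 0.
Arguments psd {R n}.

Lemma trmx_self_ge0 (R : realType) m (y : 'M[R]_(m, 1)) : 0 <= (y^T *m y) 0 0.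
Proof.
rewrite mxE; apply: sumr_ge0 => i _; rewrite mxE -expr2; exact: sqr_ge0.
Qed.

Lemma psd_congr (R : realType) n m (S : 'M[R]_m) (A : 'M[R]_(n, m)) :
  psd S -> psd (A *m S *m A^T).
Proof.
move=> hS x.
have -> : x^T *m (A *m S *m A^T) *m x = (A^T *m x)^T *m S *m (A^T *m x).
  by rewrite trmx_mul trmxK !mulmxA.
exact: hS.
Qed.

Lemma psd_add (R : realType) n (S T : 'M[R]_n) : psd S -> psd T -> psd (S + T).
Proof.
move=> hS hT x; rewrite mulmxDr mulmxDl mxE; exact: addr_ge0.
Qed.

Lemma psd_gram (R : realType) n m (A : 'M[R]_(n, m)) : psd (A *m A^T).
Proof.
move=> x.
have -> : x^T *m (A *m A^T) *m x = (A^T *m x)^T *m (A^T *m x).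
  by rewrite trmx_mul trmxK !mulmxA.
exact: trmx_self_ge0.
Qed.

Lemma core (R : realType) n (P : 'M[R]_n) (s v w : 'cV[R]_n) (k : R) :
  (forall i, 0 < s i 0) -> psd P ->
  (1%:M + (k *: P) *m invmx (diag_cV s)) *m w = P *m v ->
  k * \sum_i (w i 0)^+2 / s i 0 <= \sum_i v i 0 * w i 0.
Proof.
move=> hs hP hE.
have hs' : forall i, s i 0 != 0 by move=> i; rewrite gt_eqF.
set u := invmx (diag_cV s) *m w.
set y := v - k *: u.
have hw : w = P *m y.
  move: hE; rewrite mulmxDl mul1mx -mulmxA -/u -scalemxAl => hE.
  by rewrite /y mulmxBr -scalemxAr -hE addrK.
have hu : forall i, u i 0 = w i 0 / s i 0 by move=> i; exact: invdiag_apply.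
clearbody u.
have := hP y; rewrite -mulmxA -hw mxE.
have -> : \sum_j y^T 0 j * w j 0 = \sum_i v i 0 * w i 0 - k * \sum_i (w i 0)^+2 / s i 0.
  rewrite mulr_sumr -sumrB; apply: eq_bigr => i _.
  rewrite !mxE hu. ring.
by rewrite subr_ge0.
Qed.

Lemma E_unit (R : realType) n (P : 'M[R]_n) (s : 'cV[R]_n) (k : R) :
  (forall i, 0 < s i 0) -> psd P -> 0 < k ->
  (1%:M + (k *: P) *m invmx (diag_cV s)) \in unitmx.
Proof.
move=> hs hP hk.
set E := 1%:M + _.
rewrite -unitmx_tr -row_free_unit -kermx_eq0; apply/eqP/row_matrixP => i.
rewrite row0.
set r := row i (kermx E^T).
have hr : r *m E^T = 0 by rewrite /r -row_mul mulmx_ker row0.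
have hx : E *m r^T = P *m 0.
  by rewrite mulmx0 -{1}(trmxK E) -trmx_mul hr trmx0.
have := @core _ _ _ _ _ _ _ hs hP hx.
rewrite [X in _ <= X -> _]big1; last by move=> j _; rewrite !mxE mul0r.
move=> hle.
have hge : forall j : 'I_n, true -> 0 <= (r^T j 0)^+2 / s j 0.
  move=> j _; apply: divr_ge0; [exact: sqr_ge0 | exact: ltW].
have hsum : \sum_j (r^T j 0)^+2 / s j 0 = 0.
  apply: le_anti; rewrite sumr_ge0 // andbT.
  by rewrite -(pmulr_rle0 _ hk).
apply/rowP => j; have h := psumr_eq0P hge hsum (erefl true).
rewrite [RHS]mxE.
apply/eqP; rewrite -sqrf_eq0.
have : (r^T j 0 ^+ 2 / s j 0 == 0) by rewrite h.
by rewrite mxE mulf_eq0 invr_eq0 (gt_eqF (hs j)) orbF.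
Qed.
Arguments eucl_le {R n u b}.
Arguments eucl1 {R n u}.
Arguments opnorm_le {R n M b}.
Arguments invdiag_apply {R n s w i}.
Arguments trmx_self_ge0 {R m y}.
Arguments psd_congr {R n m S A}.
Arguments psd_add {R n S T}.
Arguments psd_gram {R n m A}.
Arguments core {R n P s v w k}.
Arguments E_unit {R n P s k}.

Theorem lemma2 (R : realType) (n : nat) (n_ge1 : (1 <= n)%N)
  (mu : 'cV[R]_n) (A B C Sig0 : 'M[R]_n) (S0 : 'cV[R]_n)
  (h : R -> R -> R) (q : 'cV[R]_n -> 'M[R]_n -> R)
  (gamma eps s_low chi : R)
  (Z : nat -> 'cV[R]_n) (Ret : nat -> 'cV[R]_n)
  (Sig : nat -> 'M[R]_n) (Sp : nat -> 'cV[R]_n) :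
  (* Sigma_0 positive definite *)
  Sig0^T = Sig0 ->
  (forall v : 'cV[R]_n, v != 0 -> 0 < (v^T *m Sig0 *m v) 0 0) ->
  (* positive initial prices *)
  (forall i, 0 < S0 i 0) ->
  (* dynamics (along any realization of the shocks Z) *)
  (forall t, Ret t.+1 = mu + Z t.+1) ->
  Sig 0%N = Sig0 ->
  (forall t, Sig t.+1 = C *m C^T + A *m Sig t *m A^T
                         + B *m Z t.+1 *m (Z t.+1)^T *m B^T) ->
  Sp 0%N = S0 ->
  (forall t i, Sp t.+1 i 0 = h (Sp t i 0) (Ret t.+1 i 0)) ->
  0 < gamma -> 0 < eps ->
  (* (i) C has full rank *)
  \rank C = n ->
  (* (ii) h bounded, and bounded below by s_low > 0 *)
  has_ubound (range (fun p : R * R => `|h p.1 p.2|)) ->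
  0 < s_low -> (forall s r, s_low <= h s r) ->
  (* (iii) 1 <= q <= chi *)
  (forall s p, 1 <= q s p <= chi) ->
  forall t : nat,
    ((0 < t)%N \/ (forall i, s_low <= S0 i 0 <= supnorm2 h)) ->
    let Psi := diag_cV (Sp t) in
    let P := Psi *m Sig t *m Psi in
    let qt := q (Sp t) P in
    let Pt := (gamma / (eps * qt)) *: P in
    opnorm ((eps * qt)^-1 *: invmx Psi) <= 1 / (eps * s_low) /\
    opnorm (invmx (1%:M + Pt *m invmx Psi) *m P)
      <= eps / gamma * chi * supnorm2 h.
Proof.
move=> hSym hPD hS0 hRet hSig0 hSig hSp0 hSp hg he hrk hub hsl hh hq t ht.
have n0 : (0 < n)%N := n_ge1.
have hsup : forall s r, `|h s r| <= supnorm2 h.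
  by move=> s r; apply: (ub_le_sup hub); exists (s, r).
have hSt : forall i, s_low <= Sp t i 0 <= supnorm2 h.
  case: t ht => [|t'] ht i.
    case: ht => // ht; rewrite hSp0; exact: ht.
  rewrite hSp; apply/andP; split; [exact: hh | exact: le_trans (ler_norm _) (hsup _ _)].
have hpos : forall i, 0 < Sp t i 0.
  by move=> i; apply: lt_le_trans hsl _; case/andP: (hSt i).
have hSigpsd : forall t, psd (Sig t).
  elim => [|t' IH].
    rewrite hSig0 => x; case: (eqVneq x 0) => [->|hx].
      by rewrite mulmx0 mxE.
    exact: ltW (hPD x hx).
  rewrite hSig; apply: psd_add; first apply: psd_add.
  - exact: psd_gram.
  - exact: psd_congr.
  have -> : B *m Z t'.+1 *m (Z t'.+1)^T *m B^T = (B *m Z t'.+1) *m (B *m Z t'.+1)^T.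
    by rewrite trmx_mul !mulmxA.
  exact: psd_gram.
move=> Psi P qt Pt.
have hPpsd : psd P.
  have -> : P = Psi *m Sig t *m Psi^T by rewrite /Psi /diag_cV tr_diag_mx.
  exact: psd_congr.
have /andP [hq1 hq2] := hq (Sp t) P.
change (is_true (1 <= qt)) in hq1; change (is_true (qt <= chi)) in hq2.
have hqt : 0 < qt by apply: lt_le_trans hq1.
have hH : 0 < supnorm2 h.
  by apply: lt_le_trans hsl _; case/andP: (hSt (Ordinal n0)) => a b; exact: le_trans a b.
have hs' : forall i, Sp t i 0 != 0 by move=> i; rewrite gt_eqF.
split.
  apply: opnorm_le => // v hv.
  have hv1 := eucl1 hv.
  have hb : 0 <= 1 / (eps * s_low) by apply: divr_ge0 => //; apply: mulr_ge0; exact: ltW.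
  apply: eucl_le => //.
  rewrite -[X in _ <= X]mulr1 -hv1 mulr_sumr; apply: ler_sum => i _.
  rewrite -scalemxAl mxE invdiag_apply //.
  have hx0 : 0 <= (eps * qt)^-1 / Sp t i 0.
    by apply: divr_ge0; [rewrite invr_ge0; apply: mulr_ge0; exact: ltW | exact: ltW].
  have hxb : (eps * qt)^-1 / Sp t i 0 <= 1 / (eps * s_low).
    rewrite div1r -invfM lef_pV2 ?posrE; last 2 first.
    - by apply: mulr_gt0 => //; apply: mulr_gt0.
    - by apply: mulr_gt0.
    case/andP: (hSt i) => hi _.
    rewrite -mulrA ler_pM2l //; apply: le_trans hi _.
    rewrite -{1}[Sp t i 0]mul1r ler_wpM2r //; exact: ltW.
  have -> : (eps * qt)^-1 * (v i 0 / Sp t i 0) = ((eps * qt)^-1 / Sp t i 0) * v i 0 by ring.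
  rewrite exprMn; apply: ler_wpM2r; first exact: sqr_ge0.
  nra.
set k := gamma / (eps * qt).
have hk : 0 < k by apply: divr_gt0 => //; apply: mulr_gt0.
have hEu := @E_unit _ _ P (Sp t) k hpos hPpsd hk.
apply: opnorm_le => // v hv.
have hv1 := eucl1 hv.
set E := 1%:M + _ in hEu *.
set w := (invmx E *m P) *m v.
have hEw : E *m w = P *m v by rewrite /w !mulmxA mulmxV // mul1mx.
have hc := @core _ _ P (Sp t) v w k hpos hPpsd hEw.
set H := supnorm2 h in hH hSt *.
have hlow : (\sum_i (w i 0)^+2) / H <= \sum_i (w i 0)^+2 / Sp t i 0.
  rewrite mulr_suml; apply: ler_sum => i _; apply: ler_wpM2l; first exact: sqr_ge0.
  rewrite lef_pV2 ?posrE //; by case/andP: (hSt i).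
set a := H / k.
have ha : 0 <= a by apply: divr_ge0; exact: ltW.
set Sw := \sum_i (w i 0)^+2 in hlow *.
set Svw := \sum_i v i 0 * w i 0 in hc *.
have hSw : Sw <= a * Svw.
  have -> : Sw = a * (k * (Sw / H)) by rewrite /a; field; apply/andP; split; rewrite gt_eqF.
  apply: ler_wpM2l => //; apply: le_trans hc; apply: ler_wpM2l => //; exact: ltW.
have h2 : 2 * (a * Svw) <= Sw + a ^+ 2 * \sum_i (v i 0)^+2.
  rewrite /Svw /Sw !mulr_sumr -big_split.
  apply: ler_sum => i _.
  have hq0 := sqr_ge0 (w i 0 - a * v i 0); apply: (@le_trans _ _ (w i 0 ^+ 2 + a ^+ 2 * v i 0 ^+ 2)); last exact: lexx.
  nra.
rewrite hv1 mulr1 in h2.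
have hSa : Sw <= a ^+ 2 by lra.
apply: le_trans (eucl_le ha hSa) _.
have -> : a = eps / gamma * qt * H.
  by rewrite /a /k; field; rewrite !gt_eqF.
apply: ler_wpM2r; first exact: ltW.
apply: ler_wpM2l => //; apply: divr_ge0; exact: ltW.
Qed.
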